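(* Let $H$ be a real Hilbert space, $a\in H$, $r>0$, and let $\{C_\alpha\}_{\alpha\in\Omega}$ ($|\Omega|\ge2$) be a family of closed convex subsets of $H$ each containing the closed ball $B(a,r)$. Let $C=\bigcap_\alpha C_\alpha$. (a) For every starting element $x_0\in H$ and every sequence $\{t_n\}\subset[0,1]$, every sequence $\{x_n\}$ of remote projections onto $\{C_\alpha\}$ with weakness parameters $\{t_n\}$ converges in norm. (b) If moreover $\sum_n t_n^2=\infty$, then the limit $w$ of $\{x_n\}$ belongs to $C$ and for every $n$, $$|x_n-w|\le 2|x_0-a|\prod_{k=0}^{n-1}\Bigl(1-\frac{t_k^2r^2}{|x_0-a|^2}\Bigr)^{1/2}.$$
   Context: $P_\alpha$ is the metric projection onto $C_\alpha$. A sequence of remote projections with weakness parameters $t_n\in[0,1]$ starting at $x_0$: $x_{n+1}=P_{\alpha(n)}x_n$, where $\alpha(n)\in\Omega$ is any index with $\mathrm{dist}(x_n,C_{\alpha(n)})\ge t_n\sup_\alpha\mathrm{dist}(x_n,C_\alpha)$; if $t_n=1$ for some $n$ it is required that $\max_\alpha\mathrm{dist}(x,C_\alpha)$ is attained for every $x\in H$. *)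

(* Defs.v *)
From HB Require Import structures.
From mathcomp Require Import all_boot all_order all_algebra.
From mathcomp Require Import all_classical all_reals all_analysis.
Set Implicit Arguments. Unset Strict Implicit. Unset Printing Implicit Defensive.
Import Order.TTheory GRing.Theory Num.Theory.
Import numFieldNormedType.Exports.
Local Open Scope classical_set_scope.
Local Open Scope ring_scope.

(* A real Hilbert space is a complete normed space whose norm is induced by
   an inner product: ip is symmetric, linear in its first argument, and
   `|x|^2 = ip x x. *)
Definition is_inner_product {R : realType} {H : normedModType R}
  (ip : H -> H -> R) : Prop :=
  (forall x y, ip x y = ip y x) /\
  (forall x y z, ip (x + y) z = ip x z + ip y z) /\
  (forall (c : R) x y, ip (c *: x) y = c * ip x y) /\
  (forall x, `|x| ^+ 2 = ip x x).

Definition dist_set {R : realType} {H : normedModType R} (x : H) (A : set H) : R :=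
  inf [set `|x - y| | y in A].

Definition is_metric_proj {R : realType} {H : normedModType R}
  (A : set H) (x p : H) : Prop :=
  A p /\ forall y, A y -> `|x - p| <= `|x - y|.

Definition cball {R : realType} {H : normedModType R} (a : H) (r : R) : set H :=
  [set y | `|y - a| <= r].

Definition remote_proj_seq {R : realType} {H : normedModType R} {Omega : Type}
  (C : Omega -> set H) (t : nat -> R) (x0 : H) (x : nat -> H) : Prop :=
  x 0%N = x0 /\
  forall n, exists i : Omega,
    t n * sup [set dist_set (x n) (C j) | j in [set: Omega]]
      <= dist_set (x n) (C i)
    /\ is_metric_proj (C i) (x n) (x n.+1).

(* Main.v *)
Require Import Defs.
From HB Require Import structures.
From mathcomp Require Import all_boot all_order all_algebra.
From mathcomp Require Import all_classical all_reals all_analysis.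
From mathcomp Require Import ring lra.
Import Order.TTheory GRing.Theory Num.Theory.
Import numFieldNormedType.Exports.
Local Open Scope classical_set_scope.
Local Open Scope ring_scope.
Set Implicit Arguments. Unset Strict Implicit. Unset Printing Implicit Defensive.
Lemma ipDr (R : realType) (H : normedModType R) (ip : H -> H -> R) :
  is_inner_product ip -> forall x y z, ip x (y + z) = ip x y + ip x z.
Proof. by move=> [s [d [z n]]] x y w; rewrite s d (s y) (s w). Qed.

Lemma ipZr (R : realType) (H : normedModType R) (ip : H -> H -> R) :
  is_inner_product ip -> forall (c : R) x y, ip x (c *: y) = c * ip x y.
Proof. by move=> [s [d [z n]]] c x y; rewrite s z (s y x). Qed.

Lemma ipNl (R : realType) (H : normedModType R) (ip : H -> H -> R) :
  is_inner_product ip -> forall x y, ip (- x) y = - ip x y.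
Proof. by move=> [s [d [z n]]] x y; rewrite -scaleN1r z mulN1r. Qed.

Lemma ipNr (R : realType) (H : normedModType R) (ip : H -> H -> R) :
  is_inner_product ip -> forall x y, ip x (- y) = - ip x y.
Proof. by move=> hip x y; case: (hip) => s _; rewrite (s x) ipNl // (s y x). Qed.

Lemma ipBl (R : realType) (H : normedModType R) (ip : H -> H -> R) :
  is_inner_product ip -> forall x y z, ip (x - y) z = ip x z - ip y z.
Proof. by move=> hip x y z; case: (hip) => s [d _]; rewrite d ipNl. Qed.

Lemma ipBr (R : realType) (H : normedModType R) (ip : H -> H -> R) :
  is_inner_product ip -> forall x y z, ip x (y - z) = ip x y - ip x z.
Proof. by move=> hip x y z; rewrite ipDr // ipNr. Qed.
Lemma normD2 (R : realType) (H : normedModType R) (ip : H -> H -> R) :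
  is_inner_product ip -> forall x y,
  `|x + y| ^+ 2 = `|x| ^+ 2 + 2 * ip x y + `|y| ^+ 2.
Proof.
move=> hip x y; have [s [d [z n]]] := hip.
rewrite !n (d x y (x + y)) (ipDr hip x x y) (ipDr hip y x y) (s y x).
set u := ip x x; set v := ip x y; set w := ip y y.
ring.
Qed.

Lemma normB2 (R : realType) (H : normedModType R) (ip : H -> H -> R) :
  is_inner_product ip -> forall x y,
  `|x - y| ^+ 2 = `|x| ^+ 2 - 2 * ip x y + `|y| ^+ 2.
Proof.
move=> hip x y; rewrite (normD2 hip x (- y)) (ipNr hip x y) (normrN y).
set u := `|x| ^+ 2; set v := ip x y; set w := `|y| ^+ 2.
ring.
Qed.
Lemma sqr_le (R : realType) (a b : R) : 0 <= a -> a <= b -> a ^+ 2 <= b ^+ 2.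
Proof. move=> a0 ab; nra. Qed.

Lemma proj_ip (R : realType) (H : normedModType R) (ip : H -> H -> R)
  (A : set H) (x p y : H) :
  is_inner_product ip -> convex_set (A : set (convex_lmodType H)) ->
  is_metric_proj A x p -> A y -> ip (x - p) (y - p) <= 0.
Proof.
move=> hip cA [Ap pmin] Ay.
set v := ip (x - p) (y - p); set N := `|y - p| ^+ 2.
have N0 : 0 <= N by rewrite /N sqr_ge0.
have key : forall s, 0 < s -> s <= 1 -> 2 * v <= s * N.
  move=> s s0 s1.
  have zA : A (s *: y + (1 - s) *: p).
    have := cA y p (Itv01 (ltW s0) s1) (mem_set Ay) (mem_set Ap).
    by rewrite inE.
  have h := pmin _ zA.
  have e : x - (s *: y + (1 - s) *: p) = (x - p) - s *: (y - p).
    rewrite scalerBl scale1r scalerBr opprD opprB opprB.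
    rewrite (addrC (-(s *: y))) addrA.
    rewrite [RHS]addrA; congr (_ + _).
    by rewrite (addrC (s *: p)) addrA.
  rewrite e in h.
  have h2 := sqr_le (normr_ge0 _) h.
  rewrite (normB2 hip (x - p) (s *: (y - p))) (ipZr hip) normrZ (ger0_norm (ltW s0)) in h2.
  rewrite -/v exprMn -/N in h2.
  nra.
rewrite leNgt; apply/negP => v0.
have vN : 0 < v + N by lra.
have s0 : 0 < v / (v + N) by rewrite divr_gt0.
have s1 : v / (v + N) <= 1 by rewrite ler_pdivrMr // mul1r; lra.
have := key _ s0 s1.
have -> : v / (v + N) * N = v * N / (v + N) by rewrite mulrAC.
rewrite ler_pdivlMr //.
nra.
Qed.
Lemma fejer (R : realType) (H : normedModType R) (ip : H -> H -> R)
  (A : set H) (x p c : H) :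
  is_inner_product ip -> convex_set (A : set (convex_lmodType H)) ->
  is_metric_proj A x p -> A c -> `|p - c| ^+ 2 + `|x - p| ^+ 2 <= `|x - c| ^+ 2.
Proof.
move=> hip cA pp Ac.
have h := proj_ip hip cA pp Ac.
have e : x - c = (x - p) + (p - c) by rewrite addrA subrK.
rewrite e (normD2 hip (x - p) (p - c)) -(opprB c p) (ipNr hip).
lra.
Qed.

Lemma ip0l (R : realType) (H : normedModType R) (ip : H -> H -> R) (y : H) :
  is_inner_product ip -> ip 0 y = 0.
Proof.
move=> hip; case: (hip) => _ [_ [z _]].
by rewrite -(scale0r (0 : H)) z mul0r.
Qed.

Lemma ball_step (R : realType) (H : normedModType R) (ip : H -> H -> R)
  (A : set H) (a x p : H) (r : R) :
  is_inner_product ip -> convex_set (A : set (convex_lmodType H)) ->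
  cball a r `<=` A -> 0 < r ->
  is_metric_proj A x p -> 2 * r * `|x - p| + `|p - a| ^+ 2 <= `|x - a| ^+ 2.
Proof.
move=> hip cA bA r0 pp.
have e : x - a = (x - p) + (p - a) by rewrite addrA subrK.
rewrite e (normD2 hip (x - p) (p - a)).
suff : r * `|x - p| <= ip (x - p) (p - a).
  have := sqr_ge0 `|x - p|; lra.
have [d0|dpos] := eqVneq `|x - p| 0.
  move/eqP: d0; rewrite normr_eq0 => /eqP ->.
  by rewrite (ip0l _ hip) normr0 mulr0.
have d0 : 0 < `|x - p| by rewrite lt_neqAle eq_sym dpos normr_ge0.
set d := `|x - p| in d0 dpos *.
have yA : A (a + (r / d) *: (x - p)).
  apply: bA; rewrite /cball /= addrAC subrr add0r normrZ ger0_norm.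
    by rewrite -/d divfK // gt_eqF.
  by rewrite divr_ge0 // ltW.
have h := proj_ip hip cA pp yA.
have e2 : a + (r / d) *: (x - p) - p = (r / d) *: (x - p) - (p - a).
  by rewrite opprB addrA (addrC a).
rewrite e2 (ipBr hip) (ipZr hip) in h.
case: (hip) => _ [_ [_ n]].
rewrite -n -/d in h.
have : r / d * d ^+ 2 = r * d by rewrite expr2 mulrA divfK // gt_eqF.
lra.
Qed.
Lemma dist_lb (R : realType) (H : normedModType R) (A : set H) (x : H) :
  has_lbound [set `|x - y| | y in A].
Proof. by exists 0 => _ [y _ <-]. Qed.

Lemma dist_le (R : realType) (H : normedModType R) (A : set H) (x y : H) :
  A y -> dist_set x A <= `|x - y|.
Proof. by move=> Ay; apply: (ge_inf (dist_lb A x)); exists y. Qed.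

Lemma dist_glb (R : realType) (H : normedModType R) (A : set H) (x : H) (v : R) :
  A !=set0 -> (forall y, A y -> v <= `|x - y|) -> v <= dist_set x A.
Proof.
move=> [z Az] h; apply: lb_le_inf; first by exists `|x - z|, z.
by move=> _ [y Ay <-]; apply: h.
Qed.

Lemma dist_ge0 (R : realType) (H : normedModType R) (A : set H) (x : H) :
  A !=set0 -> 0 <= dist_set x A.
Proof. by move=> ne; apply: dist_glb. Qed.

Lemma dist_adh (R : realType) (H : normedModType R) (A : set H) (x : H) (e : R) :
  A !=set0 -> 0 < e -> exists y, A y /\ `|x - y| < dist_set x A + e.
Proof.
move=> [z Az] e0.
have [_ [y Ay <-] lt] := @inf_adherent R [set `|x - y| | y in A] e e0
  (conj (ex_intro _ `|x - z| (ex_intro2 _ _ z Az erefl)) (dist_lb A x)).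
by exists y.
Qed.

Lemma dist_le_sup (R : realType) (H : normedModType R) (Omega : Type)
  (C : Omega -> set H) (a x : H) j :
  (forall i, C i a) ->
  dist_set x (C j) <= sup [set dist_set x (C i) | i in [set: Omega]].
Proof.
move=> aC; apply: ub_le_sup; last by exists j.
by exists `|x - a| => _ [i _ <-]; apply: dist_le.
Qed.
Lemma delta_bound (R : realType) (H : normedModType R) (Omega : Type)
  (C : Omega -> set H) (a x : H) (r : R) (j0 : Omega) :
  (forall i, convex_set (C i : set (convex_lmodType H))) ->
  (forall i, cball a r `<=` C i) -> 0 < r ->
  r * dist_set x (\bigcap_(i in [set: Omega]) C i)
    <= sup [set dist_set x (C i) | i in [set: Omega]] * `|x - a|.
Proof.
move=> cC bC r0.
have aC : forall i, C i a.
  by move=> i; apply: bC; rewrite /cball /= subrr normr0 ltW.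
set D := sup _.
have D0 : 0 <= D.
  apply: (le_trans _ (dist_le_sup x j0 aC)).
  by apply: dist_ge0; exists a.
set K := `|x - a|.
have K0 : 0 <= K by apply: normr_ge0.
have main : forall e, 0 < e -> r * dist_set x (\bigcap_(i in [set: Omega]) C i) <= (D + e) * K.
  move=> e e0.
  set D' := D + e.
  have D'0 : 0 < D' by rewrite /D'; lra.
  have rD : 0 < r + D' by lra.
  set l := r / (r + D').
  have l0 : 0 <= l by rewrite divr_ge0 // ltW.
  have l1 : l <= 1 by rewrite ler_pdivrMr // mul1r; lra.
  have el : 1 - l = D' / (r + D') by rewrite /l; field; rewrite gt_eqF.
  have yC : (\bigcap_(i in [set: Omega]) C i) (l *: x + (1 - l) *: a).
    move=> j _.
    have [p [Cp hp]] := dist_adh x (ex_intro _ a (aC j)) e0.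
    have hp' : `|x - p| <= D'.
      by rewrite /D'; have := dist_le_sup x j aC; rewrite -/D; lra.
    have zC : C j (a + (r / D') *: (x - p)).
      apply: bC; rewrite /cball /= addrAC subrr add0r normrZ ger0_norm.
        by rewrite mulrAC ler_pdivrMr // ler_pM2l.
      by rewrite divr_ge0 // ltW.
    have := cC j p (a + (r / D') *: (x - p)) (Itv01 l0 l1) (mem_set Cp) (mem_set zC).
    rewrite inE /= => hC.
    suff E : l *: p + (1 - l) *: (a + r / D' *: (x - p)) = l *: x + (1 - l) *: a.
      by rewrite -E; exact: hC.
    have e2 : (1 - l) * (r / D') = l by rewrite el /l; field; rewrite !gt_eqF.
    rewrite scalerDr scalerA e2 scalerBr.
    rewrite [RHS]addrC addrCA; congr (_ + _).
    by rewrite addrC subrK.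
  have h := dist_le x yC.
  have e3 : x - (l *: x + (1 - l) *: a) = (1 - l) *: (x - a).
    by rewrite scalerBr !scalerBl !scale1r opprD addrA.
  rewrite e3 normrZ ger0_norm in h; last by rewrite el divr_ge0 // ltW.
  rewrite el -/K in h.
  have E4 : r * (D' / (r + D') * K) = l * (D' * K).
    by rewrite /l; field; rewrite gt_eqF.
  have DK : 0 <= D' * K by rewrite mulr_ge0 // ltW.
  have h2 : r * dist_set x (\bigcap_(i in [set: Omega]) C i) <= r * (D' / (r + D') * K).
    by rewrite ler_pM2l.
  rewrite E4 in h2.
  nra.
apply/ler_addgt0Pr => e e0.
have K1 : 0 < K + 1 by lra.
have e'0 : 0 < e / (K + 1) by rewrite divr_gt0.
have := main _ e'0.
have : e / (K + 1) * K <= e.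
  rewrite mulrAC ler_pdivrMr // ler_pM2l //; lra.
nra.
Qed.
Lemma sqr_le_inv (R : realType) (a b : R) : 0 <= a -> 0 <= b -> a ^+ 2 <= b ^+ 2 -> a <= b.
Proof. move=> a0 b0 h; rewrite leNgt; apply/negP => ba; nra. Qed.

Unset Implicit Arguments.
Theorem mainTheorem6 (R : realType) (H : completeNormedModType R)
  (ip : H -> H -> R) (Omega : Type) (C : Omega -> set H) (a : H) (r : R)
  (t : nat -> R) (x0 : H) (x : nat -> H) :
  is_inner_product ip ->
  (exists i j : Omega, i <> j) ->
  0 < r ->
  (forall i, closed (C i)) ->
  (forall i, convex_set (C i : set (convex_lmodType H))) ->
  (forall i, cball a r `<=` C i) ->
  (forall n, 0 <= t n <= 1) ->
  ((exists n, t n = 1) ->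
     forall y : H, exists i, forall j, dist_set y (C j) <= dist_set y (C i)) ->
  remote_proj_seq C t x0 x ->
  cvgn x /\
  ([series t k ^+ 2]_k @ \oo --> +oo ->
     (\bigcap_(i in [set: Omega]) C i) (limn x) /\
     forall n, `|x n - limn x| <=
        2 * `|x0 - a| *
        \prod_(k < n) Num.sqrt (1 - t k ^+ 2 * r ^+ 2 / `|x0 - a| ^+ 2)).
Proof.
move=> hip [i0 [_ _]] r0 clC cvC bC t01 _ [x0E step].
have aC : forall i, C i a.
  by move=> i; apply: bC; rewrite /cball /= subrr normr0 ltW.
set Cap := \bigcap_(i in [set: Omega]) C i.
have capA : Cap a by move=> i _; apply: aC.
have capne : Cap !=set0 by exists a.
set K := `|x0 - a|.
have fej : forall n c, Cap c ->
    `|x n.+1 - c| ^+ 2 + `|x n - x n.+1| ^+ 2 <= `|x n - c| ^+ 2.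
  move=> n c Cc; have [i [_ pp]] := step n.
  exact: fejer hip (cvC i) pp (Cc i I).
have mono : forall n m c, Cap c -> (n <= m)%N -> `|x m - c| <= `|x n - c|.
  move=> n m c Cc /subnKC <-; elim: (m - n)%N => [|k IH]; first by rewrite addn0.
  rewrite addnS; apply: le_trans IH.
  have := fej (n + k)%N c Cc.
  have := normr_ge0 (x (n + k)%N - c); have := normr_ge0 (x (n + k).+1 - c).
  have := sqr_ge0 `|x (n + k)%N - x (n + k).+1|.
  nra.
have Kb : forall n, `|x n - a| <= K.
  by move=> n; rewrite /K -x0E; apply: mono.
have bs : forall n, 2 * r * `|x n - x n.+1| + `|x n.+1 - a| ^+ 2 <= `|x n - a| ^+ 2.
  by move=> n; have [i [_ pp]] := step n; exact: ball_step hip (cvC i) (bC i) r0 pp.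
set u := fun k => x k.+1 - x k.
have nsE : forall n, [normed series u] n = \sum_(0 <= k < n) `|u k|.
  by move=> n; rewrite /normed_series_of seriesEnat.
have sb : forall n, 2 * r * [normed series u] n + `|x n - a| ^+ 2 <= K ^+ 2.
  elim=> [|n IH]; first by rewrite nsE big_geq // mulr0 add0r /K x0E.
  rewrite !nsE big_nat_recr //= distrC -nsE.
  have := bs n; lra.
have cva : cvgn x.
  have cs : cvgn [normed series u].
    apply: nondecreasing_is_cvgn.
      by apply: nondecreasing_series => n _ _; apply: normr_ge0.
    exists (K ^+ 2 / (2 * r)) => _ [n _ <-].
    rewrite ler_pdivlMr ?mulr_gt0 // mulrC.
    have := sb n; have := sqr_ge0 `|x n - a|; lra.
  have := normed_cvg cs.
  have -> : series u = (fun n => x n - x 0%N).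
    apply: funext => n; rewrite seriesEnat /= /u telescope_sumr //.
  move=> h.
  have -> : x = (fun n => (x n - x 0%N) + x 0%N) by apply: funext => n; rewrite subrK.
  by apply: is_cvgD => //; apply: is_cvg_cst.
split=> //.
move=> div.
set w := limn x.
have wc : forall n c, Cap c -> `|w - c| <= `|x n - c|.
  move=> n c Cc; apply/ler_addgt0Pr => e e0.
  have [N _ hN] := cvgr_dist_lt x w cva e e0.
  have hm := hN (maxn N n) (leq_maxl N n).
  have := mono n (maxn N n) c Cc (leq_maxr N n).
  have := ler_distD (x (maxn N n)) w c.
  rewrite /= in hm; lra.
set dl := fun n => dist_set (x n) Cap.
have dl0 : forall n, 0 <= dl n by move=> n; apply: dist_ge0.
have xw : forall n, `|x n - w| <= 2 * dl n.
  move=> n; rewrite -ler_pdivrMl //; apply: dist_glb => // c Cc.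
  have := wc n c Cc; have := ler_distD c (x n) w; rewrite (distrC c w); lra.
have K0 : 0 <= K by apply: normr_ge0.
have q0 : forall n, 0 <= t n ^+ 2 * r ^+ 2 / K ^+ 2.
  by move=> n; apply: mulr_ge0; [apply: mulr_ge0|rewrite invr_ge0]; apply: sqr_ge0.
have dstep : forall n, dl n.+1 ^+ 2 <= dl n ^+ 2 * (1 - t n ^+ 2 * r ^+ 2 / K ^+ 2).
  move=> n; have [i [htD pp]] := step n.
  set D := sup _ in htD.
  have hd : dist_set (x n) (C i) <= `|x n - x n.+1| := dist_le (x n) (proj1 pp).
  have hrb := delta_bound (x n) i0 cvC bC r0.
  rewrite -/D -/Cap -/(dl n) in hrb.
  have D0 : 0 <= D.
    apply: (le_trans _ (dist_le_sup (x n) i0 aC)).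
    by apply: dist_ge0; exists a.
  have /andP [tn0 tn1] := t01 n.
  have h0 : r * dl n <= D * K.
    by apply: le_trans hrb _; rewrite ler_wpM2l // Kb.
  have h1 : t n * r * dl n <= `|x n - x n.+1| * K.
    have : t n * (r * dl n) <= t n * (D * K) by rewrite ler_wpM2l.
    have : t n * D * K <= `|x n - x n.+1| * K by rewrite ler_wpM2r //; apply: le_trans hd.
    rewrite !mulrA; lra.
  set Q := t n ^+ 2 * r ^+ 2 / K ^+ 2 * dl n ^+ 2.
  have Q0 : 0 <= Q by rewrite /Q mulr_ge0 ?q0 ?sqr_ge0.
  have Qb : Q <= `|x n - x n.+1| ^+ 2.
    have [K00|Kn0] := eqVneq K 0.
      by rewrite /Q K00 expr0n /= invr0 mulr0 mul0r sqr_ge0.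
    have Kp : 0 < K by rewrite lt_neqAle eq_sym Kn0 K0.
    have -> : Q = (t n * r * dl n) ^+ 2 / K ^+ 2 by rewrite /Q; ring.
    rewrite ler_pdivrMr ?exprn_gt0 // -exprMn; apply: sqr_le => //.
    by rewrite !mulr_ge0 // ltW.
  set S := Num.sqrt (dl n.+1 ^+ 2 + Q).
  have SC : forall c, Cap c -> S <= `|x n - c|.
    move=> c Cc; have hh2 := fej n c Cc.
    have hh1 := sqr_le (dl0 n.+1) (dist_le (x n.+1) Cc).
    rewrite -[`|x n - c|]normr_id -sqrtr_sqr ler_sqrt ?sqr_ge0 //.
    lra.
  have Sd : S <= dl n := dist_glb capne SC.
  have := sqr_le (sqrtr_ge0 _) Sd.
  rewrite sqr_sqrtr; last by have := sqr_ge0 (dl n.+1); lra.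
  have -> : dl n ^+ 2 * (1 - t n ^+ 2 * r ^+ 2 / K ^+ 2) = dl n ^+ 2 - Q.
    by rewrite /Q; ring.
  lra.
have dprod : forall n, dl n <= K * \prod_(k < n) Num.sqrt (1 - t k ^+ 2 * r ^+ 2 / K ^+ 2).
  elim=> [|n IH].
    by rewrite big_ord0 mulr1 /dl /K -x0E; apply: dist_le.
  rewrite big_ord_recr /= mulrA.
  set f := 1 - t n ^+ 2 * r ^+ 2 / K ^+ 2.
  have sf0 : 0 <= Num.sqrt f by apply: sqrtr_ge0.
  have h : dl n.+1 <= dl n * Num.sqrt f.
    apply: sqr_le_inv => //; first by rewrite mulr_ge0.
    have hs := dstep n; rewrite -/f in hs.
    case: (lerP 0 f) => f0.
      by rewrite exprMn sqr_sqrtr.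
    rewrite (ler0_sqrtr (ltW f0)) mulr0 expr0n /=.
    have : dl n ^+ 2 * f <= 0 by rewrite mulr_ge0_le0 ?sqr_ge0 ?ltW.
    lra.
  apply: le_trans h _; rewrite ler_wpM2r //.
have xb : forall n, `|x n - w| <=
    2 * K * \prod_(k < n) Num.sqrt (1 - t k ^+ 2 * r ^+ 2 / K ^+ 2).
  by move=> n; rewrite -mulrA; apply: le_trans (xw n) _; rewrite ler_pM2l.
split=> //.
have dz : forall e, 0 < e -> exists n, dl n < e.
  move=> e e0; case: (pselect (exists n, dl n < e)) => // hne; exfalso.
  have hge : forall n, e <= dl n.
    by move=> n; rewrite leNgt; apply/negP => h; apply: hne; exists n.
  have Kp : 0 < K.
    rewrite lt_neqAle K0 andbT eq_sym; apply/negP => /eqP K00.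
    have := hge 0%N; have := dprod 0%N; rewrite big_ord0 mulr1 K00; lra.
  set c := r ^+ 2 * e ^+ 2 / K ^+ 2.
  have c0 : 0 < c by rewrite /c !mulr_gt0 ?invr_gt0 ?exprn_gt0.
  have hS : forall n, dl n ^+ 2 <= dl 0%N ^+ 2 - c * series (fun k => t k ^+ 2) n.
    elim => [|n IH]; first by rewrite seriesEnat /= big_geq // mulr0 subr0.
    rewrite seriesSr.
    have h1 := dstep n.
    have h2 : t n ^+ 2 * r ^+ 2 / K ^+ 2 * e ^+ 2 <= t n ^+ 2 * r ^+ 2 / K ^+ 2 * dl n ^+ 2.
      by rewrite ler_wpM2l ?q0 // sqr_le // ltW.
    have h3 : c * t n ^+ 2 = t n ^+ 2 * r ^+ 2 / K ^+ 2 * e ^+ 2 by rewrite /c; ring.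
    have h4 : dl n ^+ 2 * (1 - t n ^+ 2 * r ^+ 2 / K ^+ 2) =
      dl n ^+ 2 - t n ^+ 2 * r ^+ 2 / K ^+ 2 * dl n ^+ 2 by ring.
    have h5 : c * (series (fun k => t k ^+ 2) n + t n ^+ 2) =
      c * series (fun k => t k ^+ 2) n + c * t n ^+ 2 by ring.
    lra.
  have [N _ hN] := cvgry_gt div (dl 0%N ^+ 2 / c).
  have := hN N (leqnn N); rewrite /= ltr_pdivrMr // => hc.
  have := hS N; have := sqr_ge0 (dl N); rewrite mulrC in hc; lra.
move=> j _; apply: (clC j) => B /nbhs_ballP [e e0 sub].
have e4 : 0 < e / 4 by rewrite divr_gt0.
have [n hn] := dz _ e4.
have [c [Cc hc]] := dist_adh (x n) capne e4.
exists c; split; first exact: Cc j I.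
apply: sub; rewrite -ball_normE /ball_ /=.
have := ler_distD (x n) w c; have := xw n; rewrite (distrC w (x n)) -/(dl n) in hc *.
lra.
Qed.
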